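(* Let $q$ be a prime power, $h\ge 2$ and $v$ integers, and let $\mathcal{S}'$ be a spanning projective $2h$-cylinder in $\mathrm{PG}(v-1,q)$. Let $\mathcal{S}$ be the set of points of $\mathrm{PG}(v-1,q^h)$ obtained by taking, for each point $\langle x\rangle_{\mathbb{F}_q}\in\mathcal{S}'$ (with $x\in\mathbb{F}_q^v\subseteq\mathbb{F}_{q^h}^v$), the point $\langle x\rangle_{\mathbb{F}_{q^h}}$. Then $\mathcal{S}$ is a spanning set of $(q^h)^2$ points in $\mathrm{PG}(v-1,q^h)$ which is $q^h$-divisible but is not a $2$-cylinder (over $\mathbb{F}_{q^h}$).
   Context: For a prime power $Q$, $\mathrm{PG}(v-1,Q)$ is the projective space of $\mathbb{F}_Q^v$; a $k$-space is a $k$-dimensional subspace (points are $1$-spaces, hyperplanes $(v-1)$-spaces). A set $\mathcal{S}$ of points is spanning if its points span $\mathbb{F}_Q^v$, and it is $Q^r$-divisible if $|\mathcal{S}\cap H|\equiv|\mathcal{S}|\pmod{Q^r}$ for every hyperplane $H$. Over $\mathbb{F}_Q$, an $(r+1)$-cylinder is a multiset of $Q^{r+1}$ points which arises as the union (counted with multiplicity) of the point sets $L_1\setminus F,\dots,L_Q\setminus F$, where $L_1,\dots,L_Q$ are $(r+1)$-spaces and $F$ is an $r$-space contained in every $L_i$ ($L_i\setminus F$ denotes the set of points of $L_i$ not in $F$); it is projective if this multiset is a set, and spanning if its points span $\mathbb{F}_Q^v$. Here $\mathbb{F}_q$ is viewed as a subfield of $\mathbb{F}_{q^h}$. *)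

(* Defs.v *)
(* Projective geometry PG(v-1,F) over a finite field F:
   a k-space of F^v is represented canonically by a square matrix A : 'M[F]_v
   with A = <<A>>%MS (its row space) and \rank A = k; points are 1-spaces. *)
From HB Require Import structures.
From mathcomp Require Import all_boot all_order all_algebra all_field.
Set Implicit Arguments. Unset Strict Implicit. Unset Printing Implicit Defensive.
Import GRing.Theory.
Local Open Scope ring_scope.

Definition is_point (F : fieldType) (v : nat) (P : 'M[F]_v) : bool :=
  (\rank P == 1%N) && (<<P>>%MS == P).

Definition point_set (F : finFieldType) (v : nat) (S : {set 'M[F]_v}) : Prop :=
  forall P, P \in S -> is_point P.

Definition spanning (F : finFieldType) (v : nat) (S : {set 'M[F]_v}) : Prop :=
  \rank (\sum_(P in S) P)%MS = v.

Definition qdivisible (F : finFieldType) (v r : nat) (S : {set 'M[F]_v}) : Prop :=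
  forall H : 'M[F]_v, \rank H = v.-1 ->
    #|[set P in S | (P <= H)%MS]| = #|S| %[mod #|F| ^ r].

Definition cylinder_mult (F : finFieldType) (v : nat) (F0 : 'M[F]_v)
  (Ls : 'I_#|F| -> 'M[F]_v) (P : 'M[F]_v) : nat :=
  #|[set i : 'I_#|F| | (P <= Ls i)%MS && ~~ (P <= F0)%MS]|.

(* The set S (as a multiset with multiplicities 0/1) is a k-cylinder,
   k = r+1: there are an r-space F0 and k-spaces L_1..L_Q containing F0
   such that the multiset union of the L_i \ F0 equals S. *)
Definition is_cylinder (F : finFieldType) (v k : nat) (S : {set 'M[F]_v}) : Prop :=
  exists (F0 : 'M[F]_v) (Ls : 'I_#|F| -> 'M[F]_v),
    [/\ \rank F0 = k.-1,
        forall i, \rank (Ls i) = k,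
        forall i, (F0 <= Ls i)%MS &
        forall P, is_point P -> cylinder_mult F0 Ls P = (P \in S)].

(* Main.v *)
Require Import Defs.
From HB Require Import structures.
From mathcomp Require Import all_boot all_order all_algebra all_field.
From mathcomp Require Import zify.
Import GRing.Theory.
Local Open Scope ring_scope.

Set Implicit Arguments.
Unset Strict Implicit.

Section Gen.
Variable F : finFieldType.

Lemma card_rs m n (A : 'M[F]_(m, n)) :
  #|[set x : 'rV[F]_n | (x <= A)%MS]| = (#|F| ^ \rank A)%N.
Proof.
have -> : [set x : 'rV[F]_n | (x <= A)%MS] =
          [set u *m row_base A | u in [set: 'rV[F]_(\rank A)]].
  apply/setP => x; rewrite inE; apply/idP/imsetP.
    by rewrite -(eq_row_base A) => /submxP[u ->]; exists u; rewrite ?inE.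
  by move=> [u _ ->]; rewrite -(eq_row_base A) submxMl.
rewrite card_imset; last exact: row_free_inj (row_base_free A).
by rewrite cardsT card_mx mul1n.
Qed.

Lemma point_gen n (x : 'rV[F]_n) : x != 0 -> is_point <<x>>%MS.
Proof. by move=> nz; rewrite /is_point mxrank_gen rank_rV nz genmx_id !eqxx. Qed.

Lemma fiber_card n (P : 'M[F]_n) : is_point P ->
  #|[set x : 'rV[F]_n | (x != 0) && (<<x>>%MS == P)]| = #|F|.-1.
Proof.
case/andP => /eqP r1 /eqP gP.
have [x0 nx0 gx0] : exists2 x0 : 'rV[F]_n, x0 != 0 & <<x0>>%MS = P.
  have nzP : P != 0 by rewrite -mxrank_eq0 r1.
  have [i nzi] : exists i, row i P != 0.
    apply/existsP; apply: contraR nzP => /existsP H; apply/eqP/row_matrixP => i.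
    by rewrite row0; apply/eqP/negPn/negP => Hi; apply: H; exists i.
  exists (row i P) => //; rewrite -[RHS]gP; apply/eq_genmx/eqmxP.
  have := (mxrank_leqif_eq (row_sub i P)).2; by rewrite rank_rV nzi r1 eqxx => <-.
have -> : [set x : 'rV[F]_n | (x != 0) && (<<x>>%MS == P)] =
          [set c *: x0 | c in [set~ (0 : F)]].
  apply/setP => x; rewrite inE; apply/andP/imsetP.
    case=> nx /eqP gx.
    have : (x <= x0)%MS by rewrite -genmxE gx -gx0 genmxE.
    case/submxP => u xu; exists (u 0 0).
      by rewrite !inE; apply: contra nx => /eqP u0; rewrite xu [u]mx11_scalar u0 mul_scalar_mx scale0r. 
    by rewrite xu -mul_scalar_mx -mx11_scalar.
  case=> c; rewrite !inE => nc ->; split; first by rewrite scaler_eq0 negb_or nc.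
  by rewrite -gx0; apply/eqP/eq_genmx/eqmx_scale.
rewrite card_imset ?cardsC1 // => c1 c2 /eqP; rewrite -subr_eq0 -scalerBl scaler_eq0 (negPf nx0) orbF subr_eq0.
by move/eqP.
Qed.

Lemma pts_card n (A : 'M[F]_n) :
  (#|F|.-1 * #|[set P | is_point P && (P <= A)%MS]|)%N = (#|F| ^ \rank A).-1.
Proof.
set N := [set x : 'rV[F]_n | (x <= A)%MS && (x != 0)].
have cN : #|N| = (#|F| ^ \rank A).-1.
  rewrite -card_rs (cardsD1 0 [set x : 'rV[F]_n | (x <= A)%MS]) inE sub0mx add1n /=.
  by apply: eq_card => x; rewrite /N !inE andbC.
rewrite -cN -[#|N|]sum1_card (partition_big (fun x => <<x>>%MS) (fun P => is_point P && (P <= A)%MS)) /=; last first.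
  by move=> x; rewrite inE => /andP[xA nx]; rewrite point_gen // genmxE.
rewrite (eq_bigr (fun _ => #|F|.-1)); last first.
  move=> P /andP[pP PA]; rewrite -(fiber_card pP) -sum1_card; apply: eq_bigl => x.
  rewrite !inE; apply/andP/andP => [[/andP[_ ->] //]|[nx /eqP gx]].
  by split; [rewrite nx andbT -genmxE gx | rewrite gx].
rewrite (eq_bigl (mem [set P | is_point P && (P <= A)%MS])) .
  by rewrite sum_nat_const mulnC.
by move=> j /=; rewrite inE.
Qed.


Lemma q_gt1 : (1 < #|F|)%N.
Proof. exact: card_finNzRing_gt1. Qed.

Lemma pts_diff n (L F0 : 'M[F]_n) : (F0 <= L)%MS ->
  (#|F|.-1 * #|[set P | is_point P && (P <= L)%MS && ~~ (P <= F0)%MS]|)%N =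
  (#|F| ^ \rank L - #|F| ^ \rank F0)%N.
Proof.
move=> sFL.
have -> : [set P | is_point P && (P <= L)%MS && ~~ (P <= F0)%MS] =
   [set P | is_point P && (P <= L)%MS] :\: [set P | is_point P && (P <= F0)%MS].
  apply/setP => P; rewrite !inE.
  by case: (is_point P) => //=; case sPF: (P <= F0)%MS => /=; rewrite ?andbF ?andbT.
rewrite cardsD (setIidPr _); last first.
  by apply/subsetP => P; rewrite !inE => /andP[-> /submx_trans ->].
rewrite mulnBr !pts_card.
have : (0 < #|F| ^ \rank F0)%N by rewrite expn_gt0 ltnW // q_gt1.
lia.
Qed.

Lemma pts_term n (L F0 : 'M[F]_n) : (F0 <= L)%MS -> (\rank L <= (\rank F0).+1)%N ->
  #|[set P | is_point P && (P <= L)%MS && ~~ (P <= F0)%MS]| =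
  if \rank L == \rank F0 then 0%N else (#|F| ^ \rank F0)%N.
Proof.
move=> sFL rL; have := pts_diff sFL.
have q1 := q_gt1.
have rF := mxrankS sFL.
case: eqP => [-> | neq]; first by rewrite subnn => /eqP; rewrite muln_eq0; case/orP => /eqP; lia.
have -> : \rank L = (\rank F0).+1 by lia.
rewrite expnS.
have -> : (#|F| * #|F| ^ \rank F0 - #|F| ^ \rank F0 = #|F|.-1 * #|F| ^ \rank F0)%N.
  by rewrite -subn1 mulnBl mul1n.
move/eqP; rewrite eqn_pmul2l; [by move/eqP | lia].
Qed.

End Gen.

Section Cyl.
Variable F : finFieldType.

Lemma cyl_count v (S : {set 'M[F]_v}) (F0 : 'M[F]_v) (Ls : 'I_#|F| -> 'M[F]_v)
  (W : 'M[F]_v) :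
  point_set S -> (forall P, is_point P -> cylinder_mult F0 Ls P = (P \in S)) ->
  #|[set P in S | (P <= W)%MS]| =
  (\sum_i #|[set P | is_point P && (P <= Ls i :&: W)%MS && ~~ (P <= F0 :&: W)%MS]|)%N.
Proof.
move=> ptS cyl.
rewrite -sum1_card big_mkcond /=.
rewrite (eq_bigr (fun i => \sum_P (if P \in [set P | is_point P && (P <= Ls i :&: W)%MS && ~~ (P <= F0 :&: W)%MS] then 1 else 0)))%N; last first.
  by move=> i _; rewrite -sum1_card big_mkcond.
rewrite exchange_big /=; apply: eq_bigr => P _.
case pP: (is_point P); case PW: (P <= W)%MS.
- rewrite inE PW andbT.
  have -> : (if P \in S then 1%N else 0%N) = nat_of_bool (P \in S) by case: (P \in S).
  rewrite -cyl // /cylinder_mult -sum1_card big_mkcond /=; apply: eq_bigr => i _.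
  by rewrite !inE pP sub_capmx PW andbT sub_capmx PW andbT.
- rewrite inE PW andbF big1 // => i _; rewrite inE sub_capmx PW andbF.
  by rewrite andbF.
- rewrite inE PW andbT; case PS: (P \in S); first by rewrite (ptS _ PS) in pP.
  by rewrite big1 // => i _; rewrite inE pP.
- by rewrite inE PW andbF big1 // => i _; rewrite inE pP.
Qed.
End Cyl.

Section Map.
Variables (K L : finFieldType) (f : {rmorphism K -> L}).

Definition Wof n (X : 'M[L]_n) : 'M[K]_n :=
  (\sum_(x : 'rV[K]_n | (map_mx f x <= X)%MS) <<x>>)%MS.

Lemma map_Wof n (X : 'M[L]_n) : (map_mx f (Wof X) <= X)%MS.
Proof.
rewrite /Wof; elim/big_rec: _ => [|x acc Px IH]; first by rewrite map_mx0 sub0mx.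
by rewrite map_addsmx addsmx_sub IH andbT map_genmx genmxE.
Qed.

Lemma WofP m n (X : 'M[L]_n) (A : 'M[K]_(m, n)) :
  (A <= Wof X)%MS = (map_mx f A <= X)%MS.
Proof.
apply/idP/idP => H.
  by apply: submx_trans (map_Wof X); rewrite map_submx.
apply/row_subP => i; apply: (sumsmx_sup (row i A)); last by rewrite genmxE.
by rewrite map_row (submx_trans (row_sub i _) H).
Qed.

Lemma Phi_inj n : {in [pred P : 'M[K]_n | <<P>>%MS == P] &,
  injective (fun P => <<map_mx f P>>%MS)}.
Proof.
move=> P R; rewrite !inE => /eqP gP /eqP gR /genmxP.
rewrite !map_submx => /genmxP; by rewrite gP gR.
Qed.

End Map.


Section Rank.
Variables (K L : finFieldType) (f : {rmorphism K -> L}).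

Lemma Wof_rank n (H : 'M[L]_n) h : #|L| = (#|K| ^ h)%N -> \rank H = n.-1 ->
  (0 < n)%N -> (n <= \rank (Wof f H) + h)%N.
Proof.
move=> cL rH n0.
set C := cokermx H.
pose phi (x : 'rV[K]_n) : 'rV[L]_n := map_mx f x *m C.
have phiW x : (x <= Wof f H)%MS = (phi x == 0) by rewrite WofP submxE.
pose s (y : 'rV[L]_n) : 'rV[K]_n := odflt 0 [pick z | phi z == y].
have sP x : phi (x - s (phi x)) = 0.
  rewrite /s; case: pickP => [z /eqP e|/(_ x)]; last by rewrite eqxx.
  by rewrite /= /phi map_mxB mulmxBl; rewrite /phi in e; rewrite e subrr.
pose g x := (x - s (phi x), phi x).
have ginj : injective g.
  move=> x y [] e1 e2; move: e1; rewrite e2; exact: addIr.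
have : (#|[set g x | x in [set: 'rV[K]_n]]| <=
       #|setX [set x : 'rV[K]_n | (x <= Wof f H)%MS] [set y : 'rV[L]_n | (y <= C)%MS]|)%N.
  apply: subset_leq_card; apply/subsetP => z /imsetP[x _ ->].
  by rewrite inE /= !inE phiW sP eqxx submxMl.
rewrite card_imset // cardsX !card_rs cardsT card_mx mul1n /C mxrank_coker rH.
have -> : (n - n.-1 = 1)%N by lia.
rewrite cL expn1 -expnD leq_exp2l //; exact: q_gt1.
Qed.
End Rank.

Unset Implicit Arguments.
Set Strict Implicit.

Theorem mainTheorem12 (K L : finFieldType) (iota : {rmorphism K -> L})
  (h v : nat) (S' : {set 'M[K]_v}) :
  (2 <= h)%N -> #|L| = (#|K| ^ h)%N ->
  point_set S' -> spanning S' -> is_cylinder (2 * h)%N S' ->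
  let S := [set <<map_mx iota P>>%MS | P in S'] in
  [/\ point_set S, spanning S, #|S| = (#|L| ^ 2)%N, qdivisible 1%N S
    & ~ is_cylinder 2 S].
Proof.
move=> h2 cL ptS' spS' [F0 [Ls [rF0 rLs sFL cyl]]] S.
have q1 : (1 < #|K|)%N := q_gt1 K.
have ptPhi P : is_point P -> is_point <<map_mx iota P>>%MS.
  by case/andP => r1 g1; rewrite /is_point mxrank_gen mxrank_map r1 genmx_id eqxx.
have injS : {in S' &, injective (fun P => <<map_mx iota P>>%MS)}.
  move=> P R PS RS; apply: Phi_inj; rewrite inE.
    by case/andP: (ptS' _ PS).
  by case/andP: (ptS' _ RS).
have cardSX (X : 'M[L]_v) :
    #|[set P in S | (P <= X)%MS]| = #|[set P in S' | (P <= Wof iota X)%MS]|.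
  have -> : [set P in S | (P <= X)%MS] =
      [set <<map_mx iota P>>%MS | P in [set P in S' | (P <= Wof iota X)%MS]].
    apply/setP => P; rewrite inE; apply/andP/imsetP.
      case=> /imsetP[P' P'S ->] PX; exists P' => //.
      by rewrite inE P'S WofP -genmxE.
    case=> P'; rewrite inE => /andP[P'S P'W] ->; split; first exact: imset_f.
    by rewrite genmxE -WofP.
  rewrite card_in_imset // => P R; rewrite !inE => /andP[PS _] /andP[RS _].
  exact: injS.
have rFW W : (\rank (F0 :&: W) <= \rank W)%N by apply: mxrankS; exact: capmxSr.
have cnt (W : 'M[K]_v) : #|[set P in S' | (P <= W)%MS]| =
   (\sum_(i < #|K|) (if \rank (Ls i :&: W) == \rank (F0 :&: W) then 0
                     else #|K| ^ \rank (F0 :&: W)))%N.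
  rewrite (@cyl_count _ _ _ _ _ W ptS' cyl); apply: eq_bigr => i _.
  rewrite pts_term //; first exact: capmxS.
  have e1 := mxrank_sum_cap F0 (Ls i :&: W)%MS.
  have e2 : (\rank (F0 + Ls i :&: W) <= 2 * h)%N.
    by rewrite -(rLs i); apply: mxrankS; rewrite addsmx_sub sFL capmxSl.
  have e3 : (\rank (F0 :&: (Ls i :&: W)) <= \rank (F0 :&: W))%N.
    by apply: mxrankS; apply: capmxS => //; exact: capmxSr.
  rewrite rF0 in e1; lia.
have v0 : (0 < v)%N.
  have := rank_leq_col F0; rewrite rF0; lia.
have cS' : #|S'| = (#|K| ^ (2 * h))%N.
  have -> : S' = [set P in S' | (P <= 1%:M)%MS].
    by apply/setP => P; rewrite inE submx1 andbT.
  rewrite cnt (eq_bigr (fun _ => #|K| ^ (2 * h).-1)%N); last first.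
    by move=> i _; rewrite !capmx1 rLs rF0; case: ifP => //; lia.
  rewrite sum_nat_const card_ord -expnS; congr (_ ^ _)%N; lia.
have cS : #|S| = (#|K| ^ (2 * h))%N by rewrite card_in_imset.
split.
- by move=> P /imsetP[P' P'S ->]; apply: ptPhi; apply: ptS'.
- rewrite /spanning; set T := (\sum_(P in S) P)%MS.
  have sub : ((\sum_(P in S') P)%MS <= Wof iota T)%MS.
    apply/sumsmx_subP => P PS; rewrite WofP -genmxE.
    by apply: (sumsmx_sup (<<map_mx iota P>>%MS)); [exact: imset_f | exact: submx_refl].
  apply/eqP; rewrite eqn_leq rank_leq_col /= -{1}spS'.
  apply: leq_trans (mxrankS sub) _; rewrite -(mxrank_map iota).
  exact/mxrankS/map_Wof.
- by rewrite cS cL -expnM mulnC.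
- move=> H rH; rewrite cardSX cnt cS cL expn1.
  set W := Wof iota H; set e := \rank (F0 :&: W).
  have rW := Wof_rank iota cL rH v0.
  have e1 := mxrank_sum_cap F0 W; have e2 := rank_leq_col (F0 + W)%MS.
  rewrite rF0 -/e in e1; rewrite -/W in rW.
  have dv : (#|K| ^ h %| \sum_(i < #|K|) (if \rank (Ls i :&: W) == e then 0
                     else #|K| ^ e))%N.
    case: (leqP h e) => he.
      apply: dvdn_sum => i _; case: ifP => _; [exact: dvdn0 | exact: dvdn_exp2l].
    have eh : e = h.-1 by lia.
    rewrite (eq_bigr (fun _ => #|K| ^ e)%N); last first.
      move=> i _; case: eqP => // ei; exfalso.
      have f1 := mxrank_sum_cap (Ls i) W; have f2 := rank_leq_col (Ls i + W)%MS.
      rewrite rLs in f1; lia.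
    rewrite sum_nat_const card_ord -expnS eh prednK //; lia.
  have dv2 : (#|K| ^ h %| #|K| ^ (2 * h))%N by apply: dvdn_exp2l; lia.
  by rewrite (eqP dv) (eqP dv2).
- move=> [G0 [Ms [rG0 rMs sGM cylS]]].
  have L0 : (0 < #|L|)%N by rewrite cL expn_gt0 ltnW.
  pose i0 : 'I_#|L| := Ordinal L0.
  set M := Ms i0.
  have cT : #|[set P | is_point P && (P <= M)%MS && ~~ (P <= G0)%MS]| = #|L|.
    by rewrite pts_term ?rMs ?rG0 ?expn1 // sGM.
  have sub1 : [set P | is_point P && (P <= M)%MS && ~~ (P <= G0)%MS] \subset
              [set P in S | (P <= M)%MS].
    apply/subsetP => P; rewrite !inE => /andP[/andP[pP PM] nPG]; rewrite PM andbT.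
    have Hi : i0 \in [set i | (P <= Ms i)%MS && ~~ (P <= G0)%MS] by rewrite inE PM nPG.
    have := cylS P pP; rewrite /cylinder_mult => E.
    apply/negPn/negP => nPS; move: E; rewrite (negPf nPS) => /eqP.
    by rewrite cards_eq0 => /eqP E0; rewrite E0 inE in Hi.
  have sub2 : [set P in S' | (P <= Wof iota M)%MS] \subset
              [set P | is_point P && (P <= Wof iota M)%MS].
    by apply/subsetP => P; rewrite !inE => /andP[PS ->]; rewrite ptS'.
  have rWM : (\rank (Wof iota M) <= 2)%N.
    by rewrite -(mxrank_map iota) -(rMs i0); apply: mxrankS; apply: map_Wof.
  have pc := pts_card (Wof iota M).
  have c1 := subset_leq_card sub1; have c2 := subset_leq_card sub2.
  rewrite cT cardSX in c1.
  have hX : (#|K| ^ 2 <= #|L|)%N by rewrite cL leq_pexp2l // ltnW.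
  have rX : (#|K| ^ \rank (Wof iota M) <= #|K| ^ 2)%N by rewrite leq_pexp2l // ltnW.
  have X0 : (0 < #|K| ^ 2)%N by rewrite expn_gt0 ltnW.
  have m1 : (#|K|.-1 * #|K| ^ 2 <= #|K|.-1 * #|L|)%N by rewrite leq_mul2l hX orbT.
  have m2 : (#|K| ^ 2 <= #|K|.-1 * #|K| ^ 2)%N by rewrite leq_pmull //; lia.
  have m3 : (#|K|.-1 * #|L| <= #|K|.-1 *
      #|[set P | is_point P && (P <= Wof iota M)%MS]|)%N.
    by rewrite leq_mul2l (leq_trans c1 c2) orbT.
  lia.
Qed.
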